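(* Consider the algorithm SR-DFF run with input $m$ on a stream consistent with a representation $\mathcal{G}$ of size $m$ with at most $k$ exceptions. At all times during the run, if $C[\hat x]$ is a valid and non-corrupted rule, then: (i) the conjunction $C[\hat x]$ is satisfied by every example in $G(\hat x)$; and (ii) for every feature $\phi$ in $C[\hat x]$, there is some valid example $x\in\mathcal{X}$ such that $\phi(G(\hat x),G(x))=\phi$.
   Context: Setting. $\mathcal{X}$ is a domain, $\mathcal{Y}$ a finite label set, $\Phi$ a set of binary features on $\mathcal{X}$ closed under negation. A representation of size $m$ is a cover $\mathcal{G}=\{G_1,\dots,G_m\}$ of $\mathcal{X}$ by components with labels $\ell(G)$; each $x$ has a fixed component $G(x)\ni x$; $c^*(x)=\ell(G(x))$; for components $G_i,G_j$ with different labels there is $\phi(G_i,G_j)\in\Phi$ true on all of $G_i$ and false on all of $G_j$, with $\phi(G_j,G_i)=\neg\phi(G_i,G_j)$. Protocol: the learner first gets $x_0$ with label $y_0$; then each example $x_t$ arrives, the learner predicts a label with an explanation example previously seen with that label; on a mistake the teacher gives $y_t=c^*(x_t)$ and $\phi(G(x_t),G(\hat x_t))$, $\hat x_t$ the explanation. An exception is an example on which the feedback is inconsistent with the representation/protocol; a stream is consistent with $\mathcal{G}$ with at most $k$ exceptions if at most $k$ examples are exceptions. Non-exception examples are called valid. SR-DFF (input $m$): receives $(x_0,y_0)$; maintains a list $L$ of rules, each indexed by a representative example $x$, with a conjunction $C[x]$ of features and a label $\texttt{label}[x]$. On $x_t$: if some $C[\hat x]\in L$ is satisfied by $x_t$,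 predict $\texttt{label}[\hat x]$ with explanation $\hat x$; if incorrect, receive $y_t,\phi$, set $C[\hat x]:=C[\hat x]\wedge\neg\phi$, and delete the rule if $C[\hat x]$ has at least $m$ features. Otherwise predict $y_0$ with explanation $x_0$; if incorrect, receive $y_t,\phi$ and add a new rule with empty conjunction $C[x_t]$ and $\texttt{label}[x_t]=y_t$. A rule $C[x]$ is valid if $x$ is a valid example (it is created by an exception if $x$ is an exception). A rule is corrupted if at least one of the features in its conjunction was added during a refinement step triggered by an example $x_t$ that was an exception. *)

(* Defs.v *)
From mathcomp Require Import all_boot.
Set Implicit Arguments. Unset Strict Implicit. Unset Printing Implicit Defensive.

Section SRDFF.
Variables (X : Type) (Y : eqType) (F : eqType).
Variables (eval : F -> X -> bool) (neg : F -> F).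

(* A rule of the list L, with ghost bookkeeping:
   rep   = representative example x (the rule is C[x]),
   born  = index in the trace of the step that created the rule,
   conj  = the conjunction C[x] (list of features),
   lbl   = label[x],
   refs  = indices in the trace of the steps that triggered refinements. *)
Record rule := Rule { rep : X; born : nat; conj : seq F; lbl : Y; refs : seq nat }.

(* One round of the protocol after (x0,y0): example ex, predicted label plab
   with explanation pexp, and the teacher feedback fb
   (None = prediction declared correct; Some (y, phi) = mistake with feedback). *)
Record step := Step { ex : X; plab : Y; pexp : X; fb : option (Y * F) }.

Definition sat (C : seq F) (x : X) : bool := all (fun f => eval f x) C.

Variables (m : nat) (x0 : X) (y0 : Y).

Definition refine_rule (t : nat) (r : rule) (o : option (Y * F)) : seq rule :=
  match o with
  | None => [:: r]
  | Some (_, f) =>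
      let C := rcons (conj r) (neg f) in
      if m <= size C then [::]
      else [:: Rule (rep r) (born r) C (lbl r) (rcons (refs r) t)]
  end.

Definition new_rule (t : nat) (s : step) : seq rule :=
  match fb s with
  | None => [::]
  | Some (y, _) => [:: Rule (ex s) t [::] y [::]]
  end.

(* [run tr L]: after processing the rounds tr (in order; round of index t is
   the t-th element of tr), the list of rules may be L.  The choice among
   several satisfied rules is left nondeterministic. *)
Inductive run : seq step -> seq rule -> Prop :=
| run_nil : run [::] [::]
| run_rule tr L1 r L2 s :
    run tr (L1 ++ r :: L2) ->
    sat (conj r) (ex s) -> plab s = lbl r -> pexp s = rep r ->
    run (rcons tr s) (L1 ++ refine_rule (size tr) r (fb s) ++ L2)
| run_default tr L s :
    run tr L ->
    ~~ has (fun r => sat (conj r) (ex s)) L ->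
    plab s = y0 -> pexp s = x0 ->
    run (rcons tr s) (L ++ new_rule (size tr) s).

Definition is_representation (comp : 'I_m -> X -> bool) (G : X -> 'I_m)
  (lab : 'I_m -> Y) (phi : 'I_m -> 'I_m -> F) : Prop :=
  (forall x, comp (G x) x) /\
  (forall i j, lab i != lab j ->
     (forall x, comp i x -> eval (phi i j) x) /\
     (forall x, comp j x -> ~~ eval (phi i j) x)) /\
  (forall i j, lab i != lab j -> phi j i = neg (phi i j)).

Variables (G : X -> 'I_m) (lab : 'I_m -> Y) (phi : 'I_m -> 'I_m -> F).

(* A round is valid (non-exception) iff the feedback is the one of the
   truthful teacher for the representation. *)
Definition valid_step (s : step) : bool :=
  let c := lab (G (ex s)) in
  if plab s == c then fb s == None
  else (c != lab (G (pexp s))) && (fb s == Some (c, phi (G (ex s)) (G (pexp s)))).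

Definition valid_at (tr : seq step) (t : nat) : bool :=
  if ohead (drop t tr) is Some s then valid_step s else false.

Definition exception_at (tr : seq step) (t : nat) : bool :=
  if ohead (drop t tr) is Some s then ~~ valid_step s else false.

Definition num_exceptions (tr : seq step) : nat :=
  (y0 != lab (G x0)) + count (fun s => ~~ valid_step s) tr.

Definition valid_example (tr : seq step) (x : X) : Prop :=
  (x = x0 /\ y0 = lab (G x0)) \/
  (exists t s, ohead (drop t tr) = Some s /\ ex s = x /\ valid_step s).

Definition valid_rule (tr : seq step) (r : rule) : bool := valid_at tr (born r).

Definition corrupted (tr : seq step) (r : rule) : bool :=
  has (exception_at tr) (refs r).

End SRDFF.

(* Main.v *)
Require Import Defs.
From mathcomp Require Import all_boot.
From Stdlib Require List.

Lemma ohead_drop_rcons {T : Type} {tr : seq T} (s : T) {t s'} :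
  ohead (drop t tr) = Some s' -> ohead (drop t (rcons tr s)) = Some s'.
Proof.
elim: tr t => [|a tr IH] [|t] //=.
by move/IH.
Qed.

Lemma ohead_drop_last {T : Type} (tr : seq T) s :
  ohead (drop (size tr) (rcons tr s)) = Some s.
Proof. by elim: tr. Qed.

Theorem lemma1 (X : Type) (Y : finType) (F : eqType)
  (eval : F -> X -> bool) (neg : F -> F)
  (Hneg : forall f x, eval (neg f) x = ~~ eval f x)
  (m : nat) (comp : 'I_m -> X -> bool) (G : X -> 'I_m)
  (lab : 'I_m -> Y) (phi : 'I_m -> 'I_m -> F)
  (Hrep : is_representation eval neg comp G lab phi)
  (k : nat) (x0 : X) (y0 : Y) (tr : seq (step X Y F)) (L : seq (rule X Y F))
  (Hrun : run eval neg m x0 y0 tr L)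
  (Hk : num_exceptions x0 y0 G lab phi tr <= k) :
  forall L1 r L2, L = L1 ++ r :: L2 ->
    valid_rule G lab phi tr r -> ~~ corrupted G lab phi tr r ->
    (forall x, comp (G (rep r)) x -> sat eval (conj r) x) /\
    (forall f, f \in conj r ->
       exists x, valid_example x0 y0 G lab phi tr x /\ phi (G (rep r)) (G x) = f).
Proof.
case: Hrep => [_ [Hsep Hsym]].
pose P tr (r : rule X Y F) :=
    (forall x, comp (G (rep r)) x -> sat eval (conj r) x) /\
    (forall f, f \in conj r ->
       exists x, valid_example x0 y0 G lab phi tr x /\ phi (G (rep r)) (G x) = f).
have exc_mono : forall tr s t, exception_at G lab phi tr t ->
    exception_at G lab phi (rcons tr s) t.
  move=> tr' s t; rewrite /exception_at.
  case E: (ohead (drop t tr')) => [s'|] //.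
  by rewrite (ohead_drop_rcons s E).
have cor_mono : forall tr s r, ~~ corrupted G lab phi (rcons tr s) r ->
    ~~ corrupted G lab phi tr r.
  move=> tr' s r'; rewrite /corrupted; apply: contra.
  by apply: sub_has => t; apply: exc_mono.
have P_mono : forall tr s r, P tr r -> P (rcons tr s) r.
  move=> tr' s r' [H1 H2]; split => // f Hf.
  have [x [Hv Hx]] := H2 f Hf; exists x; split => //.
  case: Hv => [Hv|[t [s' [E [Ex Hv]]]]]; first by left.
  by right; exists t, s'; rewrite (ohead_drop_rcons s E).
have Inv : forall r, List.In r L -> ~~ corrupted G lab phi tr r -> P tr r.
  clear Hk.
  elim: Hrun => {tr L}.
  - by [].
  - move=> tr L1 r L2 s Hr IH Hsat Hpl Hpe r'.
    move=> Hin0 Hc; case: (List.in_app_or _ _ _ Hin0) => [Hin|Hin1].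
    2: case: (List.in_app_or _ _ _ Hin1) => Hin.
    + apply: P_mono; apply: IH (cor_mono _ _ _ Hc).
      by apply: List.in_or_app; left.
    + move: Hin Hc; rewrite /refine_rule.
      case Efb: (fb s) => [[y f]|]; last first.
        move=> [<-|[]] Hc; apply: P_mono; apply: IH (cor_mono _ _ _ Hc).
        by apply: List.in_or_app; right; left.
      case: ifP => _ // [<-|[]] Hc.
      move: Hc; rewrite /corrupted /= has_rcons negb_or => /andP [Hv Hc].
      have Hvs : valid_step G lab phi s.
        by move: Hv; rewrite /exception_at ohead_drop_last negbK.
      have [Hr1 Hr2] : P tr r.
        apply: IH (cor_mono _ _ _ Hc).
        by apply: List.in_or_app; right; left.
      have Hvs0 := Hvs; move: Hvs; rewrite /valid_step Efb.
      case: eqP => _ //; rewrite Hpe => /andP [Hne /eqP [_ Hf]].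
      have Hf' : neg f = phi (G (rep r)) (G (ex s)) by rewrite Hf (Hsym _ _ Hne).
      have Hne' : lab (G (rep r)) != lab (G (ex s)) by rewrite eq_sym.
      split => /=.
      * move=> x Hx; rewrite /sat all_rcons Hf' (proj1 (Hsep _ _ Hne') x Hx).
        exact: Hr1.
      * move=> f'; rewrite mem_rcons inE => /orP [/eqP ->|Hf''].
          exists (ex s); split; last by rewrite Hf'.
          by right; exists (size tr), s; rewrite ohead_drop_last.
        by have [_ H] := P_mono tr s r (Logic.conj Hr1 Hr2); apply: H.
    + apply: P_mono; apply: IH (cor_mono _ _ _ Hc).
      by apply: List.in_or_app; right; right.
  - move=> tr L s Hr IH Hnh Hpl Hpe r' Hin0 Hc; case: (List.in_app_or _ _ _ Hin0) => Hin.
      by apply: P_mono; apply: IH (cor_mono _ _ _ Hc).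
    move: Hin; rewrite /new_rule; case: (fb s) => [[y f]|] // [<-|[]].
    by split.
move=> L1 r L2 HL _ Hc; apply: Inv Hc.
by rewrite HL; apply: List.in_or_app; right; left.
Qed.
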